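(* Let $\mathcal K$ be a finitely complete 2-category and $f:A\to B$ a 1-cell. For any span $(d_1,E_1,c_1)$ from $X$ to $Z$ and any discrete fibration $(d_2,E_2,c_2)$ from $A\times X$ to $B\times Z$, composition with the map of spans $i_f\times\mathrm{id}:f\times E_1\to f/B\times E_1$ determines a bijection between maps of spans $f/B\times E_1\to E_2$ and maps of spans $f\times E_1\to E_2$.
   Context: $f/B$ is the lax pullback of $f:A\to B$ and $1_B$, with projections $p:f/B\to A$, $q:f/B\to B$ and universal 2-cell $\lambda:fp\Rightarrow q$; as a span from $A$ to $B$ it is $(p,f/B,q)$. The span $f$ is $(1_A,A,f)$ from $A$ to $B$. $i_f:A\to f/B$ is the unique 1-cell with $pi_f=1_A$, $qi_f=f$ and $\lambda i_f=\mathrm{id}$; it is a map of spans $f\to f/B$. A span from $A$ to $B$ is $(d,E,c)$ with $d:E\to A$, $c:E\to B$; a map of spans is a 1-cell between heads commuting with both legs. The product of spans $(d,E,c)$ from $A$ to $B$ and $(d',E',c')$ from $X$ to $Z$ is $(d\times d',E\times E',c\times c')$ from $A\times X$ to $B\times Z$, and the product of span maps is the product of 1-cells. A span $(d,E,c)$ from $P$ to $Q$ is a discrete fibration from $P$ to $Q$ if for every object $Y$ the span of categories $\mathcal K(Y,P)\leftarrow\mathcal K(Y,E)\to\mathcal K(Y,Q)$ is a discrete fibration: (i) for each object $e$ and arrow $u:a\to d(e)$ there is a unique $\bar u$ with codomain $e$, $d(\bar u)=u$ and $c(\bar u)$ an identity; (ii) for each $v:c(e)\to b$ a unique $\bar v$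 with domain $e$, $d(\bar v)$ an identity and $c(\bar v)=v$; (iii) every arrow $h$ equals the (defined) composite $\overline{d(h)}\circ\overline{c(h)}$. *)

(* Defs.v *)
Record TwoCatData := {
  ob : Type;
  hom : ob -> ob -> Type;
  cell : forall A B : ob, hom A B -> hom A B -> Type;
  id1 : forall A : ob, hom A A;
  comp1 : forall A B C : ob, hom B C -> hom A B -> hom A C;
  id2 : forall (A B : ob) (f : hom A B), cell A B f f;
  vcomp : forall (A B : ob) (f g h : hom A B),
      cell A B g h -> cell A B f g -> cell A B f h;
  hcomp : forall (A B C : ob) (g g' : hom B C) (f f' : hom A B),
      cell B C g g' -> cell A B f f' ->
      cell A C (comp1 A B C g f) (comp1 A B C g' f')
}.

Set Implicit Arguments.
Unset Strict Implicit.

Arguments ob : clear implicits.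
Arguments hom {t} A B.
Arguments cell {t A B} f g.
Arguments id1 {t} A.
Arguments comp1 {t A B C} g f.
Arguments id2 {t A B} f.
Arguments vcomp {t A B f g h} _ _.
Arguments hcomp {t A B C g g' f f'} _ _.

(** [g ⊚ f] is "first f, then g". *)
Notation "g ⊚ f" := (comp1 g f) (at level 40, left associativity).

(** Heterogeneous equality of 2-cells (with possibly different boundaries). *)
Definition cheq {K : TwoCatData} {A B : ob K} {f g f' g' : hom A B}
  (α : cell f g) (β : cell f' g') : Prop :=
  existT (fun p : hom A B * hom A B => cell (fst p) (snd p)) (f, g) α
  = existT (fun p : hom A B * hom A B => cell (fst p) (snd p)) (f', g') β.

Definition ccast {K : TwoCatData} {A B : ob K} {f f' g g' : hom A B}
  (e1 : f = f') (e2 : g = g') (α : cell f g) : cell f' g' :=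
  match e1 in _ = x return cell x g' with
  | eq_refl => match e2 in _ = y return cell f y with eq_refl => α end
  end.

Definition lwhisk {K : TwoCatData} {A B C : ob K} (k : hom B C)
  {f f' : hom A B} (α : cell f f') : cell (k ⊚ f) (k ⊚ f') :=
  hcomp (id2 k) α.
Definition rwhisk {K : TwoCatData} {A B C : ob K} {g g' : hom B C}
  (α : cell g g') (k : hom A B) : cell (g ⊚ k) (g' ⊚ k) :=
  hcomp α (id2 k).

Record TwoCatAxioms (K : TwoCatData) : Prop := {
  ax_idl : forall (A B : ob K) (f : hom A B), id1 B ⊚ f = f;
  ax_idr : forall (A B : ob K) (f : hom A B), f ⊚ id1 A = f;
  ax_assoc : forall (A B C D : ob K) (h : hom C D) (g : hom B C) (f : hom A B),
      h ⊚ (g ⊚ f) = (h ⊚ g) ⊚ f;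
  ax_vidl : forall (A B : ob K) (f g : hom A B) (α : cell f g),
      vcomp (id2 g) α = α;
  ax_vidr : forall (A B : ob K) (f g : hom A B) (α : cell f g),
      vcomp α (id2 f) = α;
  ax_vassoc : forall (A B : ob K) (f g h k : hom A B)
      (γ : cell h k) (β : cell g h) (α : cell f g),
      vcomp γ (vcomp β α) = vcomp (vcomp γ β) α;
  ax_hid : forall (A B C : ob K) (g : hom B C) (f : hom A B),
      hcomp (id2 g) (id2 f) = id2 (g ⊚ f);
  ax_interchange : forall (A B C : ob K) (g g' g'' : hom B C)
      (f f' f'' : hom A B) (β' : cell g' g'') (β : cell g g')
      (α' : cell f' f'') (α : cell f f'),
      hcomp (vcomp β' β) (vcomp α' α) = vcomp (hcomp β' α') (hcomp β α);
  ax_hidl : forall (A B : ob K) (f f' : hom A B) (α : cell f f'),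
      cheq (hcomp (id2 (id1 B)) α) α;
  ax_hidr : forall (A B : ob K) (f f' : hom A B) (α : cell f f'),
      cheq (hcomp α (id2 (id1 A))) α;
  ax_hassoc : forall (A B C D : ob K) (h h' : hom C D) (g g' : hom B C)
      (f f' : hom A B) (γ : cell h h') (β : cell g g') (α : cell f f'),
      cheq (hcomp γ (hcomp β α)) (hcomp (hcomp γ β) α)
}.

Record TwoCat := {
  tc :> TwoCatData;
  tc_ax : TwoCatAxioms tc
}.

Definition lam_at {K : TwoCat} {A B C : ob K} {f : hom A C} {g : hom B C}
  {P : ob K} {p : hom P A} {q : hom P B} (lam : cell (f ⊚ p) (g ⊚ q))
  {Y : ob K} (h : hom Y P) : cell (f ⊚ (p ⊚ h)) (g ⊚ (q ⊚ h)) :=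
  ccast (eq_sym (ax_assoc (tc_ax K) f p h))
        (eq_sym (ax_assoc (tc_ax K) g q h)) (rwhisk lam h).

Definition has_terminal (K : TwoCat) : Prop :=
  exists T : ob K,
    (forall Y : ob K, exists! h : hom Y T, True) /\
    (forall (Y : ob K) (h h' : hom Y T), exists! θ : cell h h', True).

Definition has_equalizers (K : TwoCat) : Prop :=
  forall (A B : ob K) (f g : hom A B),
  exists (E : ob K) (e : hom E A),
    f ⊚ e = g ⊚ e /\
    (forall (Y : ob K) (k : hom Y A), f ⊚ k = g ⊚ k ->
       exists! h : hom Y E, e ⊚ h = k) /\
    (forall (Y : ob K) (h h' : hom Y E) (α : cell (e ⊚ h) (e ⊚ h')),
       cheq (lwhisk f α) (lwhisk g α) ->
       exists! θ : cell h h', lwhisk e θ = α).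

Unset Implicit Arguments.

(** Chosen binary 2-products: [K(Y, A×B) ≅ K(Y,A) × K(Y,B)] as categories. *)
Record Product (K : TwoCat) (A B : ob K) := {
  pr_ob : ob K;
  pr1 : hom pr_ob A;
  pr2 : hom pr_ob B;
  pr_pair : forall Y : ob K, hom Y A -> hom Y B -> hom Y pr_ob;
  pr_pair1 : forall Y a b, pr1 ⊚ pr_pair Y a b = a;
  pr_pair2 : forall Y a b, pr2 ⊚ pr_pair Y a b = b;
  pr_pair_uniq : forall Y (h : hom Y pr_ob), h = pr_pair Y (pr1 ⊚ h) (pr2 ⊚ h);
  pr_pair2c : forall Y (h h' : hom Y pr_ob),
      cell (pr1 ⊚ h) (pr1 ⊚ h') -> cell (pr2 ⊚ h) (pr2 ⊚ h') -> cell h h';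
  pr_pair2c1 : forall Y h h' α β, lwhisk pr1 (pr_pair2c Y h h' α β) = α;
  pr_pair2c2 : forall Y h h' α β, lwhisk pr2 (pr_pair2c Y h h' α β) = β;
  pr_pair2c_uniq : forall Y h h' (θ : cell h h'),
      θ = pr_pair2c Y h h' (lwhisk pr1 θ) (lwhisk pr2 θ)
}.

Record Comma (K : TwoCat) (A B C : ob K) (f : hom A C) (g : hom B C) := {
  cm_ob : ob K;
  cm_p : hom cm_ob A;
  cm_q : hom cm_ob B;
  cm_lam : cell (f ⊚ cm_p) (g ⊚ cm_q);
  cm_lift : forall (Y : ob K) (a : hom Y A) (b : hom Y B),
      cell (f ⊚ a) (g ⊚ b) -> hom Y cm_ob;
  cm_lift_p : forall Y a b μ, cm_p ⊚ cm_lift Y a b μ = a;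
  cm_lift_q : forall Y a b μ, cm_q ⊚ cm_lift Y a b μ = b;
  cm_lift_lam : forall Y a b μ, cheq (rwhisk cm_lam (cm_lift Y a b μ)) μ;
  cm_lift_uniq : forall Y (h : hom Y cm_ob) a b (μ : cell (f ⊚ a) (g ⊚ b)),
      cm_p ⊚ h = a -> cm_q ⊚ h = b -> cheq (rwhisk cm_lam h) μ ->
      h = cm_lift Y a b μ;
  cm_lift2 : forall (Y : ob K) (h h' : hom Y cm_ob)
      (α : cell (cm_p ⊚ h) (cm_p ⊚ h')) (β : cell (cm_q ⊚ h) (cm_q ⊚ h')),
      vcomp (lwhisk g β) (lam_at cm_lam h) = vcomp (lam_at cm_lam h') (lwhisk f α) ->
      cell h h';
  cm_lift2_p : forall Y h h' α β H, lwhisk cm_p (cm_lift2 Y h h' α β H) = α;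
  cm_lift2_q : forall Y h h' α β H, lwhisk cm_q (cm_lift2 Y h h' α β H) = β;
  cm_lift2_uniq : forall Y h h' α β H (θ : cell h h'),
      lwhisk cm_p θ = α -> lwhisk cm_q θ = β -> θ = cm_lift2 Y h h' α β H
}.

Arguments Comma K {A B C} f g.
Arguments pr_ob {K A B} p.
Arguments pr1 {K A B} p.
Arguments pr2 {K A B} p.
Arguments pr_pair {K A B} p Y _ _.
Arguments cm_ob {K A B C f g} c.
Arguments cm_p {K A B C f g} c.
Arguments cm_q {K A B C f g} c.
Arguments cm_lam {K A B C f g} c.
Arguments cm_lift {K A B C f g} c Y a b _.
Set Implicit Arguments.

Record FinLimits (K : TwoCat) := {
  fl_terminal : has_terminal K;
  fl_equalizers : has_equalizers K;
  fl_prod : forall A B : ob K, Product K A B;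
  fl_comma : forall (A B C : ob K) (f : hom A C) (g : hom B C), Comma K f g
}.
Arguments fl_prod {K} _ A B.
Arguments fl_comma {K} _ {A B C} f g.

Section Constructions.
Context {K : TwoCat} (L : FinLimits K).

Definition pob (A B : ob K) : ob K := pr_ob (fl_prod L A B).

Definition prod1 {E A E' X : ob K} (u : hom E A) (v : hom E' X) :
  hom (pob E E') (pob A X) :=
  pr_pair (fl_prod L A X) _ (u ⊚ pr1 (fl_prod L E E')) (v ⊚ pr2 (fl_prod L E E')).

Definition commaB {A B : ob K} (f : hom A B) : Comma K f (id1 B) :=
  fl_comma L f (id1 B).

Definition i_f {A B : ob K} (f : hom A B) : hom A (cm_ob (commaB f)) :=
  cm_lift (commaB f) A (id1 A) f
    (ccast (eq_sym (ax_idr (tc_ax K) f)) (eq_sym (ax_idl (tc_ax K) f)) (id2 f)).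

End Constructions.

Record Span (K : TwoCat) (P Q : ob K) := {
  sp_head : ob K;
  sp_d : hom sp_head P;
  sp_c : hom sp_head Q
}.
Arguments Span : clear implicits.
Arguments sp_head {K P Q} s.
Arguments sp_d {K P Q} s.
Arguments sp_c {K P Q} s.

Definition is_span_map {K : TwoCat} {P Q : ob K} (S T : Span K P Q)
  (h : hom (sp_head S) (sp_head T)) : Prop :=
  sp_d T ⊚ h = sp_d S /\ sp_c T ⊚ h = sp_c S.

Definition span_of {K : TwoCat} {A B : ob K} (f : hom A B) : Span K A B :=
  {| sp_head := A; sp_d := id1 A; sp_c := f |}.

Definition comma_span {K : TwoCat} (L : FinLimits K) {A B : ob K} (f : hom A B)
  : Span K A B :=
  {| sp_head := cm_ob (commaB L f); sp_d := cm_p _; sp_c := cm_q _ |}.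

Definition prod_span {K : TwoCat} (L : FinLimits K) {P Q X Z : ob K}
  (S : Span K P Q) (T : Span K X Z) : Span K (pob L P X) (pob L Q Z) :=
  {| sp_head := pob L (sp_head S) (sp_head T);
     sp_d := prod1 L (sp_d S) (sp_d T);
     sp_c := prod1 L (sp_c S) (sp_c T) |}.

Unset Implicit Arguments.
Section DFib.
Context {K : TwoCat} {P Q : ob K} (S : Span K P Q).

Definition is_dlift {Y : ob K} (e : hom Y (sp_head S)) {a : hom Y P}
  (u : cell a (sp_d S ⊚ e)) (e1 : hom Y (sp_head S)) (ub : cell e1 e) : Prop :=
  cheq (lwhisk (sp_d S) ub) u /\
  exists x : hom Y Q, cheq (lwhisk (sp_c S) ub) (id2 x).

Definition is_clift {Y : ob K} (e : hom Y (sp_head S)) {b : hom Y Q}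
  (v : cell (sp_c S ⊚ e) b) (e2 : hom Y (sp_head S)) (vb : cell e e2) : Prop :=
  (exists x : hom Y P, cheq (lwhisk (sp_d S) vb) (id2 x)) /\
  cheq (lwhisk (sp_c S) vb) v.

Definition is_discrete_fibration : Prop :=
  (forall (Y : ob K) (e : hom Y (sp_head S)) (a : hom Y P)
          (u : cell a (sp_d S ⊚ e)),
     exists (e1 : hom Y (sp_head S)) (ub : cell e1 e),
       is_dlift e u e1 ub /\
       forall (e1' : hom Y (sp_head S)) (ub' : cell e1' e),
         is_dlift e u e1' ub' ->
         existT (fun x => cell x e) e1' ub' = existT (fun x => cell x e) e1 ub) /\
  (forall (Y : ob K) (e : hom Y (sp_head S)) (b : hom Y Q)
          (v : cell (sp_c S ⊚ e) b),
     exists (e2 : hom Y (sp_head S)) (vb : cell e e2),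
       is_clift e v e2 vb /\
       forall (e2' : hom Y (sp_head S)) (vb' : cell e e2'),
         is_clift e v e2' vb' ->
         existT (fun x => cell e x) e2' vb' = existT (fun x => cell e x) e2 vb) /\
  (forall (Y : ob K) (e e' : hom Y (sp_head S)) (h : cell e e')
          (e1 : hom Y (sp_head S)) (ub : cell e1 e')
          (e2 : hom Y (sp_head S)) (vb : cell e e2),
     is_dlift e' (lwhisk (sp_d S) h) e1 ub ->
     is_clift e (lwhisk (sp_c S) h) e2 vb ->
     exists E : e2 = e1, h = vcomp ub (ccast eq_refl E vb)).

End DFib.

Arguments is_span_map {K P Q} S T h.
Arguments is_discrete_fibration {K P Q} S.
Arguments pob {K} L A B.
Arguments prod1 {K} L {E A E' X} u v.
Arguments i_f {K} L {A B} f.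

(* Main.v *)
Require Import Defs.
From Stdlib Require Import Eqdep.

Section Gen.
Context {K : TwoCat}.
Local Notation AX := (tc_ax K).

Lemma cheq_refl {A B : ob K} {f g : hom A B} (α : cell f g) : cheq α α.
Proof. reflexivity. Qed.
Lemma cheq_sym {A B : ob K} {f g f' g' : hom A B} (α : cell f g) (β : cell f' g') :
  cheq α β -> cheq β α.
Proof. unfold cheq; intros; symmetry; auto. Qed.
Lemma cheq_trans {A B : ob K} {f g f' g' f'' g'' : hom A B} (α : cell f g)
  (β : cell f' g') (γ : cell f'' g'') : cheq α β -> cheq β γ -> cheq α γ.
Proof. unfold cheq; intros H1 H2; rewrite H1; auto. Qed.
Lemma cheq_bd {A B : ob K} {f g f' g' : hom A B} {α : cell f g} {β : cell f' g'} :
  cheq α β -> f = f' /\ g = g'.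
Proof. intro H. apply (f_equal (@projT1 _ _)) in H. simpl in H.
  injection H; auto. Qed.
Lemma cheq_eq {A B : ob K} {f g : hom A B} {α β : cell f g} : cheq α β -> α = β.
Proof. intro H. exact (inj_pair2 _ (fun p : hom A B * hom A B => cell (fst p) (snd p)) (f,g) α β H). Qed.
Lemma cheq_id {A B : ob K} {x a : hom A B} (α : cell x x) : cheq α (id2 a) -> α = id2 x.
Proof. intro H. destruct (cheq_bd H) as [E _]. subst. apply cheq_eq; auto. Qed.
Lemma id2_eq {A B : ob K} {x y : hom A B} : x = y -> cheq (id2 x) (id2 y).
Proof. intros ->; reflexivity. Qed.

Lemma hcomp_cheq {A B C : ob K} {g g' h h' : hom B C} {f f' k k' : hom A B}
  (β : cell g g') (β0 : cell h h') (α : cell f f') (α0 : cell k k') :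
  cheq β β0 -> cheq α α0 -> cheq (hcomp β α) (hcomp β0 α0).
Proof.
  intros H1 H2. destruct (cheq_bd H1) as [E1 E2]. destruct (cheq_bd H2) as [E3 E4].
  subst. apply cheq_eq in H1. apply cheq_eq in H2. subst. reflexivity.
Qed.
Lemma vcomp_cheq {A B : ob K} {f g h f' g' h' : hom A B}
  (β : cell g h) (α : cell f g) (β0 : cell g' h') (α0 : cell f' g') :
  cheq β β0 -> cheq α α0 -> cheq (vcomp β α) (vcomp β0 α0).
Proof.
  intros H1 H2. destruct (cheq_bd H1) as [E1 E2]. destruct (cheq_bd H2) as [E3 E4].
  subst. apply cheq_eq in H1. apply cheq_eq in H2. subst. reflexivity.
Qed.
Lemma ccast_cheq {A B : ob K} {f f' g g' : hom A B} (e1 : f = f') (e2 : g = g')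
  (α : cell f g) : cheq (ccast e1 e2 α) α.
Proof. destruct e1, e2. reflexivity. Qed.

Lemma lwhisk_cheq {A B C : ob K} (g : hom B C) {x y x' y' : hom A B}
  (α : cell x y) (α' : cell x' y') : cheq α α' -> cheq (lwhisk g α) (lwhisk g α').
Proof. intro H. apply hcomp_cheq; auto; reflexivity. Qed.
Lemma rwhisk_cheq {A B C : ob K} {x y x' y' : hom B C} (k : hom A B)
  (α : cell x y) (α' : cell x' y') : cheq α α' -> cheq (rwhisk α k) (rwhisk α' k).
Proof. intro H. apply hcomp_cheq; auto; reflexivity. Qed.
Lemma lwhisk_eq {A B C : ob K} (g g' : hom B C) {x y : hom A B} (α : cell x y) :
  g = g' -> cheq (lwhisk g α) (lwhisk g' α).
Proof. intros ->; reflexivity. Qed.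
Lemma rwhisk_eq {A B C : ob K} {x y : hom B C} (k k' : hom A B) (α : cell x y) :
  k = k' -> cheq (rwhisk α k) (rwhisk α k').
Proof. intros ->; reflexivity. Qed.

Lemma lwhisk_lwhisk {A B C D : ob K} (g : hom C D) (f : hom B C) {x y : hom A B}
  (α : cell x y) : cheq (lwhisk g (lwhisk f α)) (lwhisk (g ⊚ f) α).
Proof. unfold lwhisk. eapply cheq_trans. apply (ax_hassoc AX).
  rewrite (ax_hid AX). reflexivity. Qed.
Lemma rwhisk_rwhisk {A B C D : ob K} {x y : hom C D} (α : cell x y) (k : hom B C)
  (k' : hom A B) : cheq (rwhisk (rwhisk α k) k') (rwhisk α (k ⊚ k')).
Proof. unfold rwhisk. eapply cheq_trans. apply cheq_sym, (ax_hassoc AX).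
  rewrite (ax_hid AX). reflexivity. Qed.
Lemma lwhisk_rwhisk {A B C D : ob K} (g : hom C D) {x y : hom B C} (α : cell x y)
  (k : hom A B) : cheq (lwhisk g (rwhisk α k)) (rwhisk (lwhisk g α) k).
Proof. unfold lwhisk, rwhisk. apply (ax_hassoc AX). Qed.
Lemma lwhisk_id {A B C : ob K} (g : hom B C) (f : hom A B) : lwhisk g (id2 f) = id2 (g ⊚ f).
Proof. apply (ax_hid AX). Qed.
Lemma rwhisk_id {A B C : ob K} (g : hom B C) (f : hom A B) : rwhisk (id2 g) f = id2 (g ⊚ f).
Proof. apply (ax_hid AX). Qed.
Lemma lwhisk_idl {A B : ob K} {x y : hom A B} (α : cell x y) : cheq (lwhisk (id1 B) α) α.
Proof. apply (ax_hidl AX). Qed.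
Lemma rwhisk_idr {A B : ob K} {x y : hom A B} (α : cell x y) : cheq (rwhisk α (id1 A)) α.
Proof. apply (ax_hidr AX). Qed.
End Gen.
Lemma eq_cheq {K : TwoCat} {A B : ob K} {f g : hom A B} (α β : cell f g) : α = β -> cheq α β.
Proof. intros ->; reflexivity. Qed.

From Stdlib Require Import ssreflect.

Section Prod.
Context {K : TwoCat} (L : FinLimits K).
Local Notation AX := (tc_ax K).

Lemma prod1_pr1 {E A E' X : ob K} (u : hom E A) (v : hom E' X) :
  pr1 (fl_prod L A X) ⊚ prod1 L u v = u ⊚ pr1 (fl_prod L E E').
Proof. unfold prod1. apply pr_pair1. Qed.
Lemma prod1_pr2 {E A E' X : ob K} (u : hom E A) (v : hom E' X) :
  pr2 (fl_prod L A X) ⊚ prod1 L u v = v ⊚ pr2 (fl_prod L E E').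
Proof. unfold prod1. apply pr_pair2. Qed.
Lemma prod_eq {A X Y : ob K} (h h' : hom Y (pob L A X)) :
  pr1 (fl_prod L A X) ⊚ h = pr1 (fl_prod L A X) ⊚ h' ->
  pr2 (fl_prod L A X) ⊚ h = pr2 (fl_prod L A X) ⊚ h' -> h = h'.
Proof. intros H1 H2.
  rewrite (pr_pair_uniq _ _ _ _ _ h) (pr_pair_uniq _ _ _ _ _ h') H1 H2. reflexivity. Qed.
Lemma prod1_comp {E A E' X F F' : ob K} (u : hom E A) (v : hom E' X)
  (u' : hom F E) (v' : hom F' E') :
  prod1 L u v ⊚ prod1 L u' v' = prod1 L (u ⊚ u') (v ⊚ v').
Proof. apply prod_eq. 
  - rewrite (ax_assoc AX) (prod1_pr1 u v) -(ax_assoc AX) (prod1_pr1 u' v') (ax_assoc AX) (prod1_pr1 (u ⊚ u') (v ⊚ v')). reflexivity.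
  - rewrite (ax_assoc AX) (prod1_pr2 u v) -(ax_assoc AX) (prod1_pr2 u' v') (ax_assoc AX) (prod1_pr2 (u ⊚ u') (v ⊚ v')). reflexivity.
Qed.
Lemma prod1_id {A X : ob K} : prod1 L (id1 A) (id1 X) = id1 (pob L A X).
Proof. apply prod_eq.
  - rewrite (prod1_pr1 (id1 A) (id1 X)) (ax_idl AX) (ax_idr AX). reflexivity.
  - rewrite (prod1_pr2 (id1 A) (id1 X)) (ax_idl AX) (ax_idr AX). reflexivity.
Qed.
Lemma prod_cell_id {A X Y : ob K} {h h' : hom Y (pob L A X)} (θ : cell h h') a b :
  cheq (lwhisk (pr1 (fl_prod L A X)) θ) (id2 a) ->
  cheq (lwhisk (pr2 (fl_prod L A X)) θ) (id2 b) -> cheq θ (id2 h).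
Proof. intros H1 H2.
  destruct (cheq_bd H1) as [E1 E1']. destruct (cheq_bd H2) as [E2 E2'].
  assert (h = h') as E by (apply prod_eq; congruence). subst h'.
  apply cheq_id in H1. apply cheq_id in H2.
  rewrite (pr_pair2c_uniq _ _ _ _ _ _ _ θ) (pr_pair2c_uniq _ _ _ _ _ _ _ (id2 h)) H1 H2 !lwhisk_id.
  reflexivity. Qed.
End Prod.

Section Comma.
Context {K : TwoCat} {A B C : ob K} {f : hom A C} {g : hom B C} (c : Comma K f g).
Local Notation AX := (tc_ax K).
Lemma comma_cell_id {Y : ob K} {h h' : hom Y (cm_ob c)} (θ : cell h h') a b :
  h = h' -> cheq (lwhisk (cm_p c) θ) (id2 a) -> cheq (lwhisk (cm_q c) θ) (id2 b) ->
  cheq θ (id2 h).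
Proof. intros E H1 H2. subst h'. apply cheq_id in H1. apply cheq_id in H2.
  assert (HH : vcomp (lwhisk g (id2 (cm_q c ⊚ h))) (lam_at (cm_lam c) h) =
               vcomp (lam_at (cm_lam c) h) (lwhisk f (id2 (cm_p c ⊚ h)))).
  { rewrite !lwhisk_id (ax_vidl AX) (ax_vidr AX). reflexivity. }
  rewrite (cm_lift2_uniq _ _ _ _ _ _ c Y h h _ _ HH θ H1 H2).
  rewrite (cm_lift2_uniq _ _ _ _ _ _ c Y h h _ _ HH (id2 h) (lwhisk_id _ _) (lwhisk_id _ _)).
  reflexivity. Qed.
End Comma.

Section Fib.
Context {K : TwoCat} {P Q : ob K} (S : Span K P Q) (DF : is_discrete_fibration S).
Lemma clift_het {Y : ob K} {e x e' x' : hom Y (sp_head S)} (θ : cell e x) (θ' : cell e' x') a a' :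
  e = e' -> cheq (lwhisk (sp_d S) θ) (id2 a) -> cheq (lwhisk (sp_d S) θ') (id2 a') ->
  cheq (lwhisk (sp_c S) θ) (lwhisk (sp_c S) θ') -> x = x'.
Proof. intros E H1 H2 H3. subst e'. destruct DF as [_ [D2 _]].
  destruct (D2 Y e _ (lwhisk (sp_c S) θ)) as [e2 [vb [_ U]]].
  assert (U1 := U x θ). assert (U2 := U x' θ').
  assert (R1 : existT (fun x0 => cell e x0) x θ = existT (fun x0 => cell e x0) e2 vb).
  { apply U1. split; [exists a; auto | reflexivity]. }
  assert (R2 : existT (fun x0 => cell e x0) x' θ' = existT (fun x0 => cell e x0) e2 vb).
  { apply U2. split; [exists a'; auto | apply cheq_sym; auto]. }
  rewrite -R2 in R1. apply (f_equal (@projT1 _ _)) in R1. exact R1. Qed.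
Lemma fib_id_cell {Y : ob K} {e x : hom Y (sp_head S)} (θ : cell e x) a b :
  cheq (lwhisk (sp_d S) θ) (id2 a) -> cheq (lwhisk (sp_c S) θ) (id2 b) -> x = e.
Proof. intros H1 H2. apply (clift_het θ (id2 e) a (sp_d S ⊚ e)); auto.
  - rewrite lwhisk_id; reflexivity.
  - rewrite lwhisk_id. destruct (cheq_bd H2) as [Eb _]. subst b. exact H2. Qed.
End Fib.


Section Main.
Context {K : TwoCat} (L : FinLimits K) {A B : ob K} (f : hom A B) (E : ob K).
Local Notation AX := (tc_ax K).
Local Notation p := (cm_p (commaB L f)).
Local Notation q := (cm_q (commaB L f)).
Local Notation lam := (cm_lam (commaB L f)).
Local Notation FB := (cm_ob (commaB L f)).
Local Notation iF := (i_f L f).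
Local Notation I := (prod1 L (i_f L f) (id1 E)).
Local Notation P := (prod1 L (cm_p (commaB L f)) (id1 E)).
Local Notation pr1F := (pr1 (fl_prod L (cm_ob (commaB L f)) E)).
Local Notation pr2F := (pr2 (fl_prod L (cm_ob (commaB L f)) E)).

Lemma if_p : p ⊚ iF = id1 A.
Proof. unfold i_f. apply cm_lift_p. Qed.
Lemma if_q : q ⊚ iF = f.
Proof. unfold i_f. apply cm_lift_q. Qed.
Lemma if_lam : cheq (rwhisk lam iF) (id2 f).
Proof. eapply cheq_trans; [apply cm_lift_lam | apply ccast_cheq]. Qed.

Lemma tau_e1 : p = p ⊚ (iF ⊚ p).
Proof. rewrite (ax_assoc AX) if_p (ax_idl AX). reflexivity. Qed.
Lemma tau_e2 : p = p ⊚ id1 FB.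
Proof. rewrite (ax_idr AX). reflexivity. Qed.
Lemma tau_e3 : f ⊚ p = q ⊚ (iF ⊚ p).
Proof. rewrite (ax_assoc AX) if_q. reflexivity. Qed.
Lemma tau_e4 : id1 B ⊚ q = q ⊚ id1 FB.
Proof. rewrite (ax_idr AX) (ax_idl AX). reflexivity. Qed.

Definition alpha' := ccast tau_e1 tau_e2 (id2 p).
Definition beta' := ccast tau_e3 tau_e4 lam.

Lemma tau_H : vcomp (lwhisk (id1 B) beta') (lam_at lam (iF ⊚ p)) =
              vcomp (lam_at lam (id1 FB)) (lwhisk f alpha').
Proof.
  apply cheq_eq. apply (cheq_trans _ (vcomp lam (id2 (f ⊚ p)))).
  - apply vcomp_cheq.
    + eapply cheq_trans; [apply lwhisk_idl | apply ccast_cheq].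
    + unfold lam_at. eapply cheq_trans; [apply ccast_cheq|].
      eapply cheq_trans; [eapply cheq_sym; apply rwhisk_rwhisk|].
      eapply cheq_trans; [eapply rwhisk_cheq; apply if_lam|].
      rewrite rwhisk_id. reflexivity.
  - apply cheq_sym. apply vcomp_cheq.
    + unfold lam_at. eapply cheq_trans; [apply ccast_cheq | apply rwhisk_idr].
    + eapply cheq_trans; [eapply lwhisk_cheq; apply ccast_cheq|].
      rewrite lwhisk_id. reflexivity.
Qed.

Definition tau := cm_lift2 _ _ _ _ _ _ (commaB L f) FB (iF ⊚ p) (id1 FB) alpha' beta' tau_H.
Lemma tau_p : lwhisk p tau = alpha'.
Proof. apply cm_lift2_p. Qed.
Lemma tau_q : lwhisk q tau = beta'.
Proof. apply cm_lift2_q. Qed.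

Lemma tau_if : cheq (rwhisk tau iF) (id2 ((iF ⊚ p) ⊚ iF)).
Proof.
  eapply comma_cell_id.
  - rewrite -(ax_assoc AX) if_p (ax_idr AX) (ax_idl AX). reflexivity.
  - eapply cheq_trans; [apply lwhisk_rwhisk|].
    eapply cheq_trans; [eapply rwhisk_cheq; eapply cheq_trans; [apply eq_cheq, tau_p | apply ccast_cheq]|].
    rewrite rwhisk_id. apply cheq_refl.
  - eapply cheq_trans; [apply lwhisk_rwhisk|].
    eapply cheq_trans; [eapply rwhisk_cheq; eapply cheq_trans; [apply eq_cheq, tau_q | apply ccast_cheq]|].
    apply if_lam.
Qed.

Lemma IP : I ⊚ P = prod1 L (iF ⊚ p) (id1 E ⊚ id1 E).
Proof. apply prod1_comp. Qed.
Lemma s1 : (iF ⊚ p) ⊚ pr1F = pr1F ⊚ (I ⊚ P).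
Proof. rewrite IP (prod1_pr1 L (iF ⊚ p) (id1 E ⊚ id1 E)). reflexivity. Qed.
Lemma s2 : id1 FB ⊚ pr1F = pr1F ⊚ id1 (pob L FB E).
Proof. rewrite (ax_idl AX) (ax_idr AX). reflexivity. Qed.
Lemma s3 : pr2F = pr2F ⊚ (I ⊚ P).
Proof. rewrite IP (prod1_pr2 L (iF ⊚ p) (id1 E ⊚ id1 E)) !(ax_idl AX). reflexivity. Qed.
Lemma s4 : pr2F = pr2F ⊚ id1 (pob L FB E).
Proof. rewrite (ax_idr AX). reflexivity. Qed.

Definition alpha1 := ccast s1 s2 (rwhisk tau pr1F).
Definition alpha2 := ccast s3 s4 (id2 pr2F).
Definition sigma := pr_pair2c K FB E (fl_prod L FB E) (pob L FB E) (I ⊚ P) (id1 _) alpha1 alpha2.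
Lemma sig1 : lwhisk pr1F sigma = alpha1.
Proof. apply pr_pair2c1. Qed.
Lemma sig2 : lwhisk pr2F sigma = alpha2.
Proof. apply pr_pair2c2. Qed.

Lemma D_sigma (X : ob K) (d1 : hom E X) :
  cheq (lwhisk (prod1 L p d1) sigma) (id2 (prod1 L p d1 ⊚ (I ⊚ P))).
Proof.
  eapply prod_cell_id.
  - eapply cheq_trans; [apply lwhisk_lwhisk|].
    eapply cheq_trans; [apply lwhisk_eq, (prod1_pr1 L p d1)|].
    eapply cheq_trans; [eapply cheq_sym; apply lwhisk_lwhisk|].
    eapply cheq_trans; [eapply lwhisk_cheq; eapply cheq_trans; [apply eq_cheq, sig1 | apply ccast_cheq]|].
    eapply cheq_trans; [apply lwhisk_rwhisk|].
    eapply cheq_trans; [eapply rwhisk_cheq; eapply cheq_trans; [apply eq_cheq, tau_p | apply ccast_cheq]|].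
    rewrite rwhisk_id. apply cheq_refl.
  - eapply cheq_trans; [apply lwhisk_lwhisk|].
    eapply cheq_trans; [apply lwhisk_eq, (prod1_pr2 L p d1)|].
    eapply cheq_trans; [eapply cheq_sym; apply lwhisk_lwhisk|].
    eapply cheq_trans; [eapply lwhisk_cheq; eapply cheq_trans; [apply eq_cheq, sig2 | apply ccast_cheq]|].
    rewrite lwhisk_id. apply cheq_refl.
Qed.

Lemma R_sigma : cheq (rwhisk sigma I) (id2 ((I ⊚ P) ⊚ I)).
Proof.
  eapply prod_cell_id.
  - eapply cheq_trans; [apply lwhisk_rwhisk|].
    eapply cheq_trans; [eapply rwhisk_cheq; eapply cheq_trans; [apply eq_cheq, sig1 | apply ccast_cheq]|].
    eapply cheq_trans; [apply rwhisk_rwhisk|].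
    eapply cheq_trans; [apply rwhisk_eq, (prod1_pr1 L iF (id1 E))|].
    eapply cheq_trans; [eapply cheq_sym; apply rwhisk_rwhisk|].
    eapply cheq_trans; [eapply rwhisk_cheq; apply tau_if|].
    rewrite rwhisk_id. apply cheq_refl.
  - eapply cheq_trans; [apply lwhisk_rwhisk|].
    eapply cheq_trans; [eapply rwhisk_cheq; eapply cheq_trans; [apply eq_cheq, sig2 | apply ccast_cheq]|].
    rewrite rwhisk_id. apply cheq_refl.
Qed.
End Main.


Theorem lemma8p3 (K : TwoCat) (L : FinLimits K) (A B : ob K) (f : hom A B)
  (X Z : ob K) (E1 : Span K X Z) (E2 : Span K (pob L A X) (pob L B Z)) :
  is_discrete_fibration E2 ->
  (forall h : hom (sp_head (prod_span L (comma_span L f) E1)) (sp_head E2),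
     is_span_map (prod_span L (comma_span L f) E1) E2 h ->
     is_span_map (prod_span L (span_of f) E1) E2
       (h ⊚ prod1 L (i_f L f) (id1 (sp_head E1)))) /\
  (forall k : hom (sp_head (prod_span L (span_of f) E1)) (sp_head E2),
     is_span_map (prod_span L (span_of f) E1) E2 k ->
     exists! h : hom (sp_head (prod_span L (comma_span L f) E1)) (sp_head E2),
       is_span_map (prod_span L (comma_span L f) E1) E2 h /\
       h ⊚ prod1 L (i_f L f) (id1 (sp_head E1)) = k).
Proof.
  intros DF. pose proof (tc_ax K) as AX.
  split.
  - intros h [Hd Hc]. cbn in *. split; cbn.
    + rewrite (ax_assoc AX) Hd (prod1_comp L _ (sp_d E1) (i_f L f) (id1 _)) if_p (ax_idr AX). reflexivity.
    + rewrite (ax_assoc AX) Hc (prod1_comp L _ (sp_c E1) (i_f L f) (id1 _)) if_q (ax_idr AX). reflexivity.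
  - intros k [Hd Hc]. cbn in *.
    set (Q := prod1 L (cm_q (commaB L f)) (sp_c E1)).
    set (I := prod1 L (i_f L f) (id1 (sp_head E1))).
    set (P := prod1 L (cm_p (commaB L f)) (id1 (sp_head E1))).
    assert (eqv : Q ⊚ (I ⊚ P) = sp_c E2 ⊚ (k ⊚ P)).
    { unfold Q, I, P. rewrite (IP L f) (prod1_comp L _ _ _ _) (ax_assoc AX).
      rewrite (ax_assoc AX (sp_c E2) k _) Hc.
      rewrite (prod1_comp L f (sp_c E1) _ _) if_q (ax_idl AX). reflexivity. }
    pose proof DF as [_ [D2 _]].
    destruct (D2 _ (k ⊚ P) _ (ccast eqv eq_refl (lwhisk Q (sigma L f (sp_head E1)))))
      as [h [vb [[[x Hx] Hv] _]]].
    assert (Hd' : sp_d E2 ⊚ h = prod1 L (cm_p (commaB L f)) (sp_d E1)).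
    { destruct (cheq_bd Hx) as [Ex1 Ex2]. rewrite Ex2 -Ex1 (ax_assoc AX) Hd.
      unfold P. rewrite (prod1_comp L _ _ _ _) (ax_idl AX) (ax_idr AX). reflexivity. }
    assert (Hc' : sp_c E2 ⊚ h = Q).
    { destruct (cheq_bd Hv) as [_ Ev]. rewrite Ev (ax_idr AX). reflexivity. }
    assert (HhI : h ⊚ I = k).
    { assert (kPI : (k ⊚ P) ⊚ I = k).
      { unfold P, I. rewrite -(ax_assoc AX) (prod1_comp L _ _ _ _) if_p (ax_idl AX) prod1_id (ax_idr AX).
        reflexivity. }
      rewrite -[in RHS]kPI. eapply (fib_id_cell E2 DF (rwhisk vb I)).
      - eapply cheq_trans; [apply lwhisk_rwhisk|].
        eapply cheq_trans; [eapply rwhisk_cheq; apply Hx|].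
        rewrite rwhisk_id. apply cheq_refl.
      - eapply cheq_trans; [apply lwhisk_rwhisk|].
        eapply cheq_trans; [eapply rwhisk_cheq; apply Hv|].
        eapply cheq_trans; [eapply rwhisk_cheq; apply ccast_cheq|].
        eapply cheq_trans; [eapply cheq_sym; apply lwhisk_rwhisk|].
        eapply cheq_trans; [eapply lwhisk_cheq; apply R_sigma|].
        rewrite lwhisk_id. apply cheq_refl. }
    exists h. split; [split; [split; [exact Hd' | exact Hc'] | exact HhI]|].
    intros h' [[Hd2 Hc2] HI']. cbn in Hd2, Hc2.
    assert (H : h ⊚ id1 _ = h' ⊚ id1 _).
    { eapply (clift_het E2 DF (lwhisk h (sigma L f (sp_head E1))) (lwhisk h' (sigma L f (sp_head E1)))).
      - rewrite !(ax_assoc AX). fold I. rewrite HhI HI'. reflexivity.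
      - eapply cheq_trans; [apply lwhisk_lwhisk|].
        eapply cheq_trans; [apply lwhisk_eq, Hd'|]. apply D_sigma.
      - eapply cheq_trans; [apply lwhisk_lwhisk|].
        eapply cheq_trans; [apply lwhisk_eq, Hd2|]. apply D_sigma.
      - eapply cheq_trans; [apply lwhisk_lwhisk|].
        eapply cheq_trans; [apply lwhisk_eq, Hc'|].
        eapply cheq_sym. eapply cheq_trans; [apply lwhisk_lwhisk|].
        apply lwhisk_eq, Hc2. }
    rewrite !(ax_idr AX) in H. exact H.
Qed.
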